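(* Let $I$ be a finite set of players. For each $\nu\in I$ let $X_\nu\subset\mathbb{R}^{n_\nu}$, let $\succeq_\nu$ be a binary relation on $\mathbb{R}^n=\prod_{\nu\in I}\mathbb{R}^{n_\nu}$, and let $K_\nu:X_{-\nu}\rightrightarrows X_\nu$ be a set-valued map, where $X_{-\nu}=\prod_{j\neq\nu}X_j$. Set $X=\prod_{\nu\in I}X_\nu$ and $K(x)=\prod_{\nu\in I}K_\nu(x^{-\nu})$ for $x\in X$. Assume that for each $\nu\in I$: (1) $K_\nu$ has non-empty values; (2) $U^s_\nu(x)$ is open for all $x\in\mathbb{R}^n$. Define $N_0:\mathbb{R}^n\rightrightarrows\mathbb{R}^n$ by $N_0(x)=\prod_{\nu\in I}\big(N_\nu(x)\setminus\{0\}\big)$, where $0$ denotes the zero vector of $\mathbb{R}^{n_\nu}$. If $\hat x\in X$ is a solution of the Stampacchia quasivariational inequality problem associated to $N_0$ and $K$, i.e. $\hat x\in K(\hat x)$ and there exists $\hat x^*\in N_0(\hat x)$ with $\langle \hat x^*,y-\hat x\rangle\ge 0$ for all $y\in K(\hat x)$, then $\hat x$ is a generalized Nash equilibrium.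
   Context: Vectors $x\in\mathbb{R}^n$ are written $x=(x^\nu,x^{-\nu})$ with $x^\nu\in\mathbb{R}^{n_\nu}$ and $x^{-\nu}$ the components of the other players. For $w^{-\nu}$, the induced relation on $\mathbb{R}^{n_\nu}$ is $x^\nu\succeq_{\nu,w^{-\nu}}y^\nu$ iff $(x^\nu,w^{-\nu})\succeq_\nu(y^\nu,w^{-\nu})$, and $\succ_{\nu,w^{-\nu}}$ denotes its asymmetric part ($a\succ b$ iff $a\succeq b$ and not $b\succeq a$). For $x\in\mathbb{R}^n$, $U^s_\nu(x)=\{y^\nu\in\mathbb{R}^{n_\nu}: y^\nu\succ_{\nu,x^{-\nu}}x^\nu\}$. For $A\subset\mathbb{R}^m$ and $z\in\mathbb{R}^m$ (no convexity, closedness or membership $z\in A$ required), the normal cone is $\mathscr{N}_A(z)=\{z^*\in\mathbb{R}^m:\langle z^*,y-z\rangle\le 0\ \forall y\in A\}$ if $A\neq\emptyset$ and $\mathscr{N}_A(z)=\mathbb{R}^m$ if $A=\emptyset$. Then $N_\nu(x)=\mathscr{N}_{U^s_\nu(x)}(x^\nu)\subset\mathbb{R}^{n_\nu}$. A point $\hat x\in K(\hat x)$ is a generalized Nash equilibrium if for each $\nu\in I$ there is no $x^\nu\in K_\nu(\hat x^{-\nu})$ with $x^\nu\succ_{\nu,\hat x^{-\nu}}\hat x^\nu$. *)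

(* Defs.v *)
From HB Require Import structures.
From mathcomp Require Import all_boot all_order all_algebra.
From mathcomp Require Import all_classical all_reals all_analysis.
Unset Printing Implicit Defensive.
Import Order.TTheory GRing.Theory Num.Theory.
Import numFieldNormedType.Exports.
Local Open Scope ring_scope.
Local Open Scope classical_set_scope.

Section GNEP.
Variables (R : realType) (I : finType) (n : I -> nat).

Definition vec (nu : I) := 'rV[R]_(n nu).
Definition profile := forall nu : I, vec nu.

Definition ip (k : nat) (u v : 'rV[R]_k) : R := \sum_(i < k) u 0 i * v 0 i.

Definition ipP (u v : profile) : R := \sum_(nu : I) @ip (n nu) (u nu) (v nu).

Definition upd (x : profile) (nu : I) (y : vec nu) : profile :=
  @dfwith I vec x nu y.

Definition strict (T : Type) (pref : T -> T -> Prop) (a b : T) : Prop :=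
  pref a b /\ ~ pref b a.

Definition Us (pref : I -> profile -> profile -> Prop) (nu : I) (x : profile)
  : set (vec nu) :=
  [set y | strict _ (pref nu) (upd x nu y) x].

(* normal cone (no convexity / membership required); equals R^k when A is empty *)
Definition ncone (k : nat) (A : set 'rV[R]_k) (z : 'rV[R]_k) : set 'rV[R]_k :=
  [set zs | A = set0 \/ (forall y, A y -> @ip k zs (y - z) <= 0)].

Definition Nnu (pref : I -> profile -> profile -> Prop) (nu : I) (x : profile)
  : set (vec nu) := @ncone (n nu) (Us pref nu x) (x nu).

Definition N0 (pref : I -> profile -> profile -> Prop) (x : profile) : set profile :=
  [set xs | forall nu, Nnu pref nu x (xs nu) /\ xs nu <> 0].

(* K(x) = prod_nu K_nu(x^{-nu}); K_nu is given as a function of the full profile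
   that depends only on x^{-nu} (see hypothesis in the theorem) *)
Definition Kprod (K : forall nu : I, profile -> set (vec nu)) (x : profile)
  : set profile := [set y | forall nu, K nu x (y nu)].

Definition inX (X : forall nu : I, set (vec nu)) : set profile :=
  [set x | forall nu, X nu (x nu)].

Definition inXminus (X : forall nu : I, set (vec nu)) (nu : I) (x : profile) :=
  forall j, j != nu -> X j (x j).

Definition SQVI (pref : I -> profile -> profile -> Prop)
  (K : forall nu : I, profile -> set (vec nu)) (xh : profile) : Prop :=
  Kprod K xh xh /\
  exists xs, N0 pref xh xs /\ (forall y, Kprod K xh y -> 0 <= ipP xs (fun nu => y nu - xh nu)).

Definition GNE (pref : I -> profile -> profile -> Prop)
  (K : forall nu : I, profile -> set (vec nu)) (xh : profile) : Prop :=
  Kprod K xh xh /\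
  forall nu, ~ exists y : vec nu, K nu xh y /\ strict _ (pref nu) (upd xh nu y) xh.

End GNEP.
Arguments ip {R k}.
Arguments ipP {R I n}.
Arguments strict {T}.
Arguments ncone {R k}.
Arguments upd {R I n}.
Arguments Us {R I n}.
Arguments Nnu {R I n}.
Arguments N0 {R I n}.
Arguments Kprod {R I n}.
Arguments inX {R I n}.
Arguments inXminus {R I n}.
Arguments SQVI {R I n}.
Arguments GNE {R I n}.

(* Main.v *)
Require Import Defs.
From HB Require Import structures.
From mathcomp Require Import all_boot all_order all_algebra.
From mathcomp Require Import all_classical all_reals all_analysis.
Import Order.TTheory GRing.Theory Num.Theory.
Import numFieldNormedType.Exports.
Local Open Scope ring_scope.
Local Open Scope classical_set_scope.

Lemma mul_self_ge0 (R : realType) (x : R) : 0 <= x * x.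
Proof. by rewrite -expr2 sqr_ge0. Qed.

Lemma ipDr (R : realType) k (u a b : 'rV[R]_k) : ip u (a + b) = ip u a + ip u b.
Proof. by rewrite /ip -big_split /=; apply: eq_bigr => i _; rewrite mxE mulrDr. Qed.

Lemma ipZr (R : realType) k (u a : 'rV[R]_k) t : ip u (t *: a) = t * ip u a.
Proof.
rewrite /ip mulr_sumr; apply: eq_bigr => i _; rewrite mxE.
by rewrite mulrCA.
Qed.

Lemma ip0r (R : realType) k (u : 'rV[R]_k) : ip u 0 = 0.
Proof. by rewrite /ip big1 // => i _; rewrite mxE mulr0. Qed.

Lemma ipxx_gt0 (R : realType) k (u : 'rV[R]_k) : u != 0 -> 0 < ip u u.
Proof.
move=> u0; rewrite lt0r; apply/andP; split; last first.
  by rewrite /ip; apply: sumr_ge0 => i _; exact: mul_self_ge0.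
apply/negP => /eqP h; move/negP: u0; apply; apply/eqP/rowP => i.
have := psumr_eq0P (P := predT) (F := fun i : 'I_k => u 0 i * u 0 i).
move=> /(_ (fun i _ => mul_self_ge0 _ _)) /(_ h) /(_ i isT) /eqP.
by rewrite mulf_eq0 orbb mxE => /eqP.
Qed.

Theorem theorem1 (R : realType) (I : finType) (n : I -> nat)
  (X : forall nu : I, set (vec R I n nu))
  (pref : I -> profile R I n -> profile R I n -> Prop)
  (K : forall nu : I, profile R I n -> set (vec R I n nu))
  (K_dep : forall nu (x y : profile R I n),
      (forall j, j != nu -> x j = y j) -> K nu x = K nu y)
  (K_into : forall nu (x : profile R I n), inXminus X nu x -> K nu x `<=` X nu)
  (K_ne : forall nu (x : profile R I n), inXminus X nu x -> K nu x !=set0)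
  (U_open : forall nu (x : profile R I n), open (Us pref nu x : set 'rV[R]_(n nu)))
  (xh : profile R I n) :
  inX X xh -> SQVI pref K xh -> GNE pref K xh.
Proof.
move=> _ [Kxx [xs [N0xs Hvi]]]; split => // nu [y [Ky Sy]].
have Uy : Us pref nu xh y by [].
have [Nn xs0] := N0xs nu.
have {}Nn : forall z, Us pref nu xh z -> ip (xs nu) (z - xh nu) <= 0.
  case: Nn => // E; by move: Uy; rewrite E.
set v := xs nu.
have v0 : v != 0 by apply/eqP.
have neg : ip v (y - xh nu) < 0.
  have : nbhs y (Us pref nu xh) by apply: open_nbhs_nbhs; split => //; exact: U_open.
  move=> /nbhs_ballP [e e0 Hb].
  pose t := e / (`|v| + 1).
  have t0 : 0 < t by rewrite divr_gt0 // ltr_pwDr // normr_ge0.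
  have : Us pref nu xh (y + t *: v).
    apply: Hb; rewrite -ball_normE /ball_ /= opprD addrA subrr add0r normrN.
    rewrite normrZ gtr0_norm // /t -mulrA gtr_pMr //.
    rewrite mulrC ltr_pdivrMr ?mul1r ?ltrDl // ltr_pwDr // normr_ge0.
  move/Nn => h; rewrite -/v addrAC ipDr ipZr in h.
  have p := ipxx_gt0 _ _ _ v0.
  apply: (lt_le_trans _ h); rewrite ltrDl; exact: mulr_gt0.
have := Hvi (upd xh nu y).
have KY : Kprod K xh (upd xh nu y).
  move=> j; rewrite /upd; case: dfwithP => // j' nj; exact: Kxx.
move=> /(_ KY); rewrite /ipP (bigD1 nu) //= big1 ?addr0.
  have -> : upd xh nu y nu = y by exact: dfwith_in.
  by move=> h; move: neg; rewrite ltNge h.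
move=> j nj; have -> : upd xh nu y j = xh j by apply: dfwith_out; rewrite eq_sym.
by rewrite subrr ip0r.
Qed.
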